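(* Let $\mathcal{P}(3^3)$ be the graph whose vertices are the 280 partitions of $\{1,\ldots,9\}$ into three cells each of size three, two such partitions being adjacent if and only if each cell of one partition contains exactly one point from each cell of the other, and let $A$ be its adjacency matrix. Let $M$ be the $280\times 36$ $0/1$-matrix with rows indexed by these partitions and columns indexed by the 2-element subsets of $\{1,\ldots,9\}$, whose entry in row $\pi$ and column $\{i,j\}$ is $1$ if and only if $\{i,j\}$ is contained in a cell of $\pi$. Let $J$ be the $280\times 36$ all-ones matrix. Then every column of $M-\frac14 J$ is an eigenvector of $A$ with eigenvalue $-12$, and the columns of $M-\frac14 J$ span a space of dimension $27$. *)

(* Defs.v *)
(* The ground set {1,...,9} is modelled by 'I_9 = {0,...,8}. *)
From HB Require Import structures.
From mathcomp Require Import all_boot all_order all_algebra.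
Set Implicit Arguments. Unset Strict Implicit. Unset Printing Implicit Defensive.
Import Order.TTheory GRing.Theory Num.Theory.
Local Open Scope ring_scope.

Definition is_part33 (P : {set {set 'I_9}}) : bool :=
  partition P [set: 'I_9] && [forall B in P, #|B| == 3%N].

Definition part33 := {P : {set {set 'I_9}} | is_part33 P}.

Definition adj33 (P Q : part33) : bool :=
  [forall B in val P, forall C in val Q, #|B :&: C| == 1%N].

Definition pair9 := {S : {set 'I_9} | #|S| == 2%N}.

Definition adjmx : 'M[rat]_(#|{: part33}|) :=
  \matrix_(i, j) (adj33 (@enum_val _ {: part33} i) (@enum_val _ {: part33} j))%:R.

Definition incmx : 'M[rat]_(#|{: part33}|, #|{: pair9}|) :=
  \matrix_(i, j) ([exists B in val (@enum_val _ {: part33} i), val (@enum_val _ {: pair9} j) \subset B])%:R.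

Definition onesmx : 'M[rat]_(#|{: part33}|, #|{: pair9}|) := const_mx 1.

(* Main.v *)
Require Import Defs.
From HB Require Import structures.
From mathcomp Require Import all_boot all_order all_algebra.
From mathcomp Require Import zify ring lra.
Import Order.TTheory GRing.Theory Num.Theory.
Set Implicit Arguments. Unset Strict Implicit. Unset Printing Implicit Defensive.

Definition iota9 := iota 0 9.
Definition lab (s : seq nat) (k : nat) := nth 0 s k.
Definition cnt9 (p : pred nat) := count p iota9.
Definition l3 := [:: 0; 1; 2].
Definition balancedc s := all (fun k => lab s k < 3) iota9 &&
   all (fun i => cnt9 (fun k => lab s k == i) == 3) l3.
Definition allseqs : seq (seq nat) :=
  foldr (fun _ acc => flatten [seq [seq v :: l | l <- acc] | v <- l3]) [:: [::]] iota9.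
Definition norm (s : seq nat) := map (fun v => index v (undup s)) s.
Definition L := undup [seq norm s | s <- allseqs & balancedc s].
Definition samek s t := all (fun x => all (fun y => (lab s x == lab s y) == (lab t x == lab t y)) iota9) iota9.
Definition adjL s t := all (fun i => all (fun j => cnt9 (fun k => (lab s k == i) && (lab t k == j)) == 1) l3) l3.
Definition memp (a b x : nat) := (x == a) || (x == b).
Definition PL := flatten [seq [seq (a,b) | b <- iota9 & a < b] | a <- iota9].
Lemma C1 : (size L == 280) && all balancedc L && uniq L.
Proof. vm_compute. reflexivity. Qed.
Lemma C2 : all (fun s => balancedc s ==> (norm s \in L) && samek s (norm s)) allseqs.
Proof. vm_compute. reflexivity. Qed.
Lemma C3 : all (fun s => all (fun t => samek s t ==> (s == t)) L) L.
Proof. vm_compute. reflexivity. Qed.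
Lemma C4 : all (fun s => let A := filter (adjL s) L in (size A == 36) &&
   all (fun ab => (count (fun t => lab t ab.1 == lab t ab.2) A == (if lab s ab.1 == lab s ab.2 then 0 else 12))) PL) L.
Proof. vm_compute. reflexivity. Qed.
Lemma C5 : all (fun ab => all (fun cd => 
  let k := count (fun t => (lab t ab.1 == lab t ab.2) && (lab t cd.1 == lab t cd.2)) L in
  let kp := count (fun t => lab t ab.1 == lab t ab.2) L in
  let m := cnt9 (fun x => memp ab.1 ab.2 x && memp cd.1 cd.2 x) in
  let np := cnt9 (memp ab.1 ab.2) in
  4 * k + 40 * m == 280 * (ab == cd) + kp + 5 * np) PL) PL.
Proof. vm_compute. reflexivity. Qed.
Lemma C6 : (size PL == 36) && uniq PL && all (fun ab => (ab.1 < 9) && (ab.2 < 9) && (ab.1 != ab.2)) PL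
  && all (fun ab => all (fun cd => all (fun x => memp ab.1 ab.2 x == memp cd.1 cd.2 x) iota9 ==> (ab == cd)) PL) PL.
Proof. vm_compute. reflexivity. Qed.
Lemma C7 : all (fun a => all (fun b => (a != b) ==> has (fun ab => all (fun x => memp ab.1 ab.2 x == memp a b x) iota9) PL) iota9) iota9.
Proof. vm_compute. reflexivity. Qed.
Lemma C8 : all (fun s => all (fun x => 4 * count (fun ab => (lab s ab.1 == lab s ab.2) && memp ab.1 ab.2 x) PL == count (fun ab => memp ab.1 ab.2 x) PL) iota9) L.
Proof. vm_compute. reflexivity. Qed.
Lemma C9 : all (fun x => all (fun w => 
  let y := (x + 1) %% 9 in let z := (x + 2) %% 9 in
  count (fun ab => memp ab.1 ab.2 x && memp ab.1 ab.2 y && memp ab.1 ab.2 w) PL +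
  count (fun ab => memp ab.1 ab.2 x && memp ab.1 ab.2 z && memp ab.1 ab.2 w) PL ==
  2 * (x == w) + count (fun ab => memp ab.1 ab.2 y && memp ab.1 ab.2 z && memp ab.1 ab.2 w) PL) iota9) iota9.
Proof. vm_compute. reflexivity. Qed.
Lemma allseqs_gen (r : seq nat) s : size s = size r -> all (fun v => v < 3) s ->
  s \in foldr (fun _ acc => flatten [seq [seq v :: l | l <- acc] | v <- l3]) [:: [::]] r.
Proof.
elim: r s => [|_ r IH] [|v s] //= [Hs] /andP[Hv Ha].
have H : s \in foldr (fun _ acc => flatten [seq [seq v :: l | l <- acc] | v <- l3]) [:: [::]] r by apply: IH.
have inj : injective (cons v) by move=> ? ? [].
case: v Hv inj => [|[|[|v]]] // _ inj; rewrite !mem_cat (mem_map inj) H ?orbT //.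
Qed.

Lemma allseqs_complete s : size s = 9 -> all (fun v => v < 3) s -> s \in allseqs.
Proof. by move=> H1 H2; apply: allseqs_gen. Qed.

Lemma cnt_card (p : pred nat) : #|[set x : 'I_9 | p x]| = cnt9 p.
Proof.
rewrite cardsE cardE /cnt9 /iota9 -val_enum_ord count_map -size_filter /enum_mem.
by rewrite filter_predT.
Qed.

Lemma all9 (p : pred nat) : all p iota9 -> forall x : 'I_9, p x.
Proof. move=> /allP H x; apply: H. by rewrite /iota9 mem_iota add0n ltn_ord. Qed.

Lemma all9' (p : pred nat) : (forall x : 'I_9, p x) -> all p iota9.
Proof. by move=> H; apply/allP => x; rewrite /iota9 mem_iota add0n => Hx; apply: (H (Ordinal Hx)). Qed.

Definition fib (s : seq nat) (i : nat) : {set 'I_9} := [set x : 'I_9 | lab s x == i].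
Definition part_of s : {set {set 'I_9}} := [set fib s i | i : 'I_3].

Lemma bal_lt s : balancedc s -> forall x : 'I_9, lab s x < 3.
Proof. by case/andP => /all9. Qed.

Lemma bal_card s : balancedc s -> forall i : 'I_3, #|fib s i| = 3.
Proof.
case/andP => _ /allP H i; rewrite /fib (cnt_card (fun k => lab s k == i)); apply/eqP/H.
by case: i => [[|[|[|]]]].
Qed.

Lemma in_part s B : B \in part_of s -> exists i : 'I_3, B = fib s i.
Proof. by case/imsetP => i _ ->; exists i. Qed.

Lemma fib_in s (i : 'I_3) : fib s i \in part_of s.
Proof. by apply: imset_f. Qed.

Lemma A1 s : balancedc s -> is_part33 (part_of s).
Proof.
move=> Hb; apply/andP; split; last first.
  by apply/forall_inP => B /in_part [i ->]; rewrite bal_card.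
have n0 : set0 \notin part_of s.
  apply/negP => /in_part [i] E; have := bal_card Hb i; by rewrite -E cards0.
apply/and3P; split => //.
- apply/eqP/setP => x; rewrite inE; apply/bigcupP.
  exists (fib s (Ordinal (bal_lt Hb x))); first exact: fib_in.
  by rewrite inE.
- have [] := trivIimset (J := predT) (F := fun i : 'I_3 => fib s i) _ n0 => //.
  move=> i j _ _ Hij; rewrite -setI_eq0; apply/eqP/setP => x; rewrite !inE.
  apply/negP => /andP[/eqP -> /eqP /val_inj E]; by rewrite E eqxx in Hij.
Qed.

Lemma samekP s t : samek s t -> forall x y : 'I_9, (lab s x == lab s y) = (lab t x == lab t y).
Proof. rewrite /samek => H x y. have := all9 H x. by move=> /all9 /(_ y) /eqP. Qed.

Lemma samek_sym s t : samek s t -> samek t s.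
Proof. by move=> H; apply: all9' => x; apply: all9' => y; rewrite (samekP H). Qed.

Lemma A2aux s t (x y : 'I_9) : balancedc s -> part_of s = part_of t ->
  lab s x == lab s y -> lab t x == lab t y.
Proof.
move=> Hb E Hxy.
have : fib s (Ordinal (bal_lt Hb x)) \in part_of t by rewrite -E fib_in.
case/in_part => j Ej.
have : x \in fib t j by rewrite -Ej inE.
have : y \in fib t j by rewrite -Ej inE eq_sym.
by rewrite !inE => /eqP -> /eqP ->.
Qed.

Lemma A2 s t : balancedc s -> balancedc t -> part_of s = part_of t -> samek s t.
Proof.
move=> Hs Ht E; apply: all9' => x; apply: all9' => y; apply/eqP; apply/idP/idP.
  exact: A2aux.
by apply: A2aux; rewrite // E.
Qed.

Lemma A3sub s t : balancedc s -> balancedc t -> samek s t -> part_of s \subset part_of t.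
Proof.
move=> Hs Ht H; apply/subsetP => B /in_part [i ->].
have : 0 < #|fib s i| by rewrite bal_card.
case/card_gt0P => x; rewrite inE => /eqP Hx.
have -> : fib s i = fib t (Ordinal (bal_lt Ht x)); last exact: fib_in.
apply/setP => y; rewrite !inE /= -(samekP H) Hx.
by rewrite eq_sym.
Qed.

Lemma A3 s t : balancedc s -> balancedc t -> samek s t -> part_of s = part_of t.
Proof.
move=> Hs Ht H; apply/eqP; rewrite eqEsubset !A3sub //; exact: samek_sym.
Qed.

Lemma A4 (P : part33) : exists s, balancedc s /\ part_of s = val P.
Proof.
case: P => P /= /andP[Hpart /forall_inP Hc].
case/and3P: Hpart => /eqP Hcov Htriv H0.
have cardP : #|P| = 3.
  have := card_partition (introT and3P (And3 (introT eqP Hcov) Htriv H0)).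
  rewrite cardsT card_ord (eq_bigr (fun _ => 3)); last by move=> B /Hc /eqP.
  rewrite sum_nat_const; lia.
set e := enum P.
have se : size e = 3 by rewrite -cardE.
have ue : uniq e by apply: enum_uniq.
have pbP : forall x : 'I_9, pblock P x \in P by move=> x; rewrite pblock_mem // Hcov inE.
pose f := fun x : 'I_9 => index (pblock P x) e.
have flt : forall x, f x < 3 by move=> x; rewrite -se index_mem mem_enum.
pose s := map (fun k => f (inord k)) iota9.
have labs : forall x : 'I_9, lab s x = f x.
  move=> x; rewrite /lab /s (nth_map 0); last by rewrite size_iota.
  by rewrite nth_iota // add0n inord_val.
have fibs : forall i, i < 3 -> fib s i = nth set0 e i.
  move=> i Hi; have Bin : nth set0 e i \in P by rewrite -mem_enum mem_nth // se.
  apply/setP => y; rewrite inE labs /f; apply/eqP/idP.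
    move=> <-; rewrite nth_index ?mem_enum //.
    by rewrite mem_pblock Hcov inE.
  move=> Hy; rewrite (def_pblock Htriv Bin Hy) index_uniq //; by rewrite se.
exists s; split.
  apply/andP; split; first by apply: all9' => x; rewrite labs.
  apply/allP => i; rewrite /l3 !inE => Hi.
  have Hi3 : i < 3 by case/or3P: Hi => /eqP ->.
  rewrite -(cnt_card (fun k => lab s k == i)) -/(fib s i) fibs //.
  by apply: Hc; rewrite -mem_enum mem_nth // se.
apply/setP => B; apply/idP/idP.
  by case/in_part => i ->; rewrite fibs // -mem_enum mem_nth // se.
move=> HB; have Hi : index B e < 3 by have := index_mem B e; rewrite se mem_enum HB.
have -> : B = fib s (Ordinal Hi) by rewrite fibs // nth_index // mem_enum.
exact: fib_in.
Qed.

Opaque L PL allseqs.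

Lemma balL : all balancedc L. Proof. by case/andP: C1 => /andP[]. Qed.
Lemma uniqL : uniq L. Proof. by case/andP: C1. Qed.
Lemma sizeL : size L = 280. Proof. by case/andP: C1 => /andP[/eqP]. Qed.

Lemma balL_nth (i : 'I_(size L)) : balancedc (nth [::] L i).
Proof. by apply: (allP balL); rewrite mem_nth. Qed.

Definition phi (i : 'I_(size L)) : part33 :=
  exist (fun P => is_part33 P) (part_of (nth [::] L i)) (A1 (balL_nth i)).

Lemma phi_inj : injective phi.
Proof.
move=> i j /(congr1 val) /= E.
have := A2 (balL_nth i) (balL_nth j) E.
have := allP (allP C3 _ (mem_nth [::] (ltn_ord i))) _ (mem_nth [::] (ltn_ord j)).
move=> /implyP H /H /eqP /eqP; rewrite nth_uniq ?uniqL // => /eqP; exact: val_inj.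
Qed.

Lemma phi_surj (P : part33) : exists i, phi i = P.
Proof.
have [s [Hb HP]] := A4 P.
pose s' := map (lab s) iota9.
have ls : forall k, k < 9 -> lab s' k = lab s k.
  by move=> k Hk; rewrite /lab /s' (nth_map 0) ?size_iota // nth_iota.
have ls' : forall x : 'I_9, lab s' x = lab s x by move=> x; rewrite ls.
have Hb' : balancedc s'.
  suff -> : balancedc s' = balancedc s by [].
  rewrite /balancedc; congr (_ && _).
have Ps : part_of s' = part_of s.
  by apply: eq_imset => i; apply/setP => x; rewrite !inE ls'.
have Hin : s' \in allseqs.
  apply: allseqs_complete; first by rewrite size_map size_iota.
  by rewrite all_map; apply: all9' => x /=; apply: bal_lt.
have /andP[HnL Hk] := implyP (allP C2 _ Hin) Hb'.
have Hbn : balancedc (norm s') by apply: (allP balL).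
have Hi : index (norm s') L < size L by rewrite index_mem; exact: HnL.
exists (Ordinal Hi); apply: val_inj => /=.
rewrite (nth_index [::] HnL) -(A3 Hb' Hbn Hk) Ps; exact: HP.
Qed.

Lemma bij_of (T : finType) n (f : 'I_n -> T) : injective f -> (forall t, exists i, f i = t) -> bijective f.
Proof.
move=> fi fs; apply: inj_card_bij => //; rewrite card_ord.
have -> : #|T| = #|codom f|.
  apply: eq_card => t; rewrite inE; have [i <-] := fs t; by rewrite codom_f.
by rewrite card_codom // card_ord.
Qed.

Local Open Scope ring_scope.

Lemma sum_bij (T : finType) n (f : 'I_n -> T) (F : T -> rat) : injective f ->
  (forall t, exists i, f i = t) -> \sum_(t : T) F t = \sum_(i < n) F (f i).
Proof. by move=> fi fs; rewrite (reindex f) //; apply: onW_bij; apply: bij_of. Qed.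

Lemma card_bij (T : finType) n (f : 'I_n -> T) : injective f ->
  (forall t, exists i, f i = t) -> #|T| = n :> nat.
Proof. by move=> fi fs; rewrite -(bij_eq_card (bij_of fi fs)) card_ord. Qed.

Lemma sizePL : size PL = 36%N. Proof. by case/andP: C6 => /andP[/andP[/eqP]]. Qed.
Lemma uniqPL : uniq PL. Proof. by case/andP: C6 => /andP[/andP[]]. Qed.
Lemma PLok : all (fun ab => (ab.1 < 9) && (ab.2 < 9) && (ab.1 != ab.2))%N PL.
Proof. by case/andP: C6 => /andP[]. Qed.
Lemma PLinj : all (fun ab => all (fun cd => all (fun x => memp ab.1 ab.2 x == memp cd.1 cd.2 x) iota9 ==> (ab == cd)) PL) PL.
Proof. by case/andP: C6. Qed.

Lemma eq_inord (x : 'I_9) a : (a < 9)%N -> (x == inord a) = (val x == a).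
Proof. move=> Ha; apply/eqP/eqP => [->|<-]; [exact: inordK | by rewrite inord_val]. Qed.

Lemma inord_eq2 a b : (a < 9)%N -> (b < 9)%N -> (inord a == inord b :> 'I_9) = (a == b).
Proof.
move=> Ha Hb; apply/eqP/eqP => [E|->//].
by have := congr1 (@nat_of_ord 9) E; rewrite !inordK.
Qed.

Definition pa (i : 'I_(size PL)) := nth (0,0)%N PL i.

Lemma pa_ok i : ((pa i).1 < 9)%N && ((pa i).2 < 9)%N && ((pa i).1 != (pa i).2).
Proof. by apply: (allP PLok); rewrite mem_nth. Qed.

Definition psi_set (i : 'I_(size PL)) : {set 'I_9} := [set inord (pa i).1; inord (pa i).2].

Lemma psi_mem i (x : 'I_9) : (x \in psi_set i) = memp (pa i).1 (pa i).2 x.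
Proof. by case/andP: (pa_ok i) => /andP[H1 H2] _; rewrite in_set2 !eq_inord. Qed.

Lemma psi_ok i : #|psi_set i| == 2%N.
Proof.
rewrite cards2; case/andP: (pa_ok i) => /andP[H1 H2] H3.
by rewrite inord_eq2 // H3.
Qed.

Definition psi (i : 'I_(size PL)) : pair9 := exist (fun S : {set 'I_9} => is_true (#|S| == 2%N)) (psi_set i) (psi_ok i).

Lemma psi_mem' i (x : 'I_9) : (x \in val (psi i)) = memp (pa i).1 (pa i).2 x.
Proof. exact: psi_mem. Qed.

Lemma psi_inj : injective psi.
Proof.
move=> i j /(congr1 val) /= E.
have H : all (fun x => memp (pa i).1 (pa i).2 x == memp (pa j).1 (pa j).2 x) iota9.
  by apply: all9' => x; rewrite -!psi_mem E.
have := allP (allP PLinj _ (mem_nth (0,0)%N (ltn_ord i))) _ (mem_nth (0,0)%N (ltn_ord j)).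
move=> /implyP /(_ H) /eqP; rewrite -/(pa i) -/(pa j).
move=> /eqP; rewrite /pa nth_uniq ?uniqPL // => /eqP; exact: val_inj.
Qed.

Lemma psi_surj (S : pair9) : exists i, psi i = S.
Proof.
case: S => S HS; case/cards2P: (HS) => x [y [Hxy ES]].
have Hy : (nat_of_ord y \in iota9) by rewrite /iota9 mem_iota add0n ltn_ord.
have := implyP (allP (all9 C7 x) _ Hy).
move=> /(_ Hxy) /hasP [ab Hab Hm].
have Hi : (index ab PL < size PL)%N by rewrite index_mem.
exists (Ordinal Hi); apply: val_inj => /=; rewrite ES; apply/setP => z.
rewrite psi_mem /pa /= nth_index // in_set2.
by rewrite (eqP (all9 Hm z)).
Qed.

Lemma sum_enum (T : finType) (F : T -> rat) : \sum_(i < #|{: T}|) F (enum_val i) = \sum_(t : T) F t.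
Proof. by rewrite -big_enum_val. Qed.

Lemma sum_list (G : seq nat -> rat) : \sum_(i < size L) G (nth [::] L i) = \sum_(t <- L) G t.
Proof. by rewrite (big_nth [::]) big_mkord. Qed.

Lemma sum_listPL (G : nat * nat -> rat) : \sum_(i < size PL) G (pa i) = \sum_(t <- PL) G t.
Proof. by rewrite (big_nth (0,0)%N) big_mkord. Qed.

Lemma sum_count (X : Type) (r : seq X) (b : pred X) : \sum_(x <- r) (b x)%:R = (count b r)%:R :> rat.
Proof. by elim: r => [|x r IH]; rewrite ?big_nil ?big_cons ?IH ?natrD. Qed.

Lemma bool_mul (b c : bool) (q : rat) : (b%:R) * ((c%:R) - q) = (b && c)%:R - b%:R * q.
Proof. by case: b; case: c; rewrite ?mul1r ?mul0r ?subr0 ?sub0r ?oppr0. Qed.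

Lemma inc_part s (a b : 'I_9) : balancedc s ->
  [exists B in part_of s, [set a; b] \subset B] = (lab s a == lab s b).
Proof.
move=> Hs; apply/existsP/eqP.
  case=> B /andP[/in_part [i ->] /subsetP H].
  have := H a (set21 a b); have := H b (set22 a b).
  by rewrite !inE => /eqP -> /eqP ->.
move=> E; exists (fib s (Ordinal (bal_lt Hs a))); rewrite fib_in /=.
by apply/subsetP => x; rewrite !inE => /orP[] /eqP ->; rewrite ?E.
Qed.

Lemma adj_part s t : balancedc s -> balancedc t ->
  [forall B in part_of s, forall C in part_of t, #|B :&: C| == 1%N] = adjL s t.
Proof.
move=> Hs Ht.
have Eset : forall (i j : nat), [set x : 'I_9 | (lab s x == i) && (lab t x == j)] = fib s i :&: fib t j.
  by move=> i' j'; apply/setP => x; rewrite !inE.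
apply/idP/idP.
  move=> /forall_inP H; apply/allP => i Hi; apply/allP => j Hj.
  have Hi3 : (i < 3)%N by move: Hi; rewrite /l3 !inE => /or3P[] /eqP ->.
  have Hj3 : (j < 3)%N by move: Hj; rewrite /l3 !inE => /or3P[] /eqP ->.
  rewrite -(cnt_card (fun k => (lab s k == i) && (lab t k == j))) Eset.
  exact: (forall_inP (H _ (fib_in s (Ordinal Hi3))) _ (fib_in t (Ordinal Hj3))).
move=> H; apply/forall_inP => B /in_part [i ->]; apply/forall_inP => C /in_part [j ->].
have Hi : (nat_of_ord i \in l3) by case: i => [[|[|[|]]]].
have Hj : (nat_of_ord j \in l3) by case: j => [[|[|[|]]]].
have := allP (allP H _ Hi) _ Hj.
by rewrite -(cnt_card (fun k => (lab s k == i) && (lab t k == j))) Eset.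
Qed.

Lemma phi_val i : val (phi i) = part_of (nth [::] L i). Proof. by []. Qed.
Lemma psi_val m : val (psi m) = [set inord (pa m).1; inord (pa m).2]. Proof. by []. Qed.

Lemma inc_psi s m : balancedc s ->
  [exists B in part_of s, val (psi m) \subset B] = (lab s (pa m).1 == lab s (pa m).2).
Proof.
case/andP: (pa_ok m) => /andP[Ha Hb] _ Hs.
by rewrite psi_val (inc_part _ _ Hs) (inordK Ha) (inordK Hb).
Qed.

Lemma bool_mul2 (b c : bool) (q : rat) : ((c%:R) - q) * b%:R = (c && b)%:R - b%:R * q.
Proof. by case: b; case: c; rewrite ?mulr1 ?mulr0 ?mul1r ?mul0r ?subr0 ?sub0r ?oppr0. Qed.

Lemma in_iota9 (x : 'I_9) : nat_of_ord x \in iota9.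
Proof. by rewrite /iota9 mem_iota add0n ltn_ord. Qed.

Lemma bool_mul3 (b1 b2 b3 c : bool) : ((b1%:R + b2%:R - b3%:R) / 2%:R) * c%:R =
  ((b1 && c)%:R + (b2 && c)%:R - (b3 && c)%:R) / 2%:R :> rat.
Proof. by case: b1; case: b2; case: b3; case: c; rewrite /= ?mulr1 ?mulr0. Qed.

Lemma nat_eq_rat2 (a b c : nat) (e : bool) : (a + b = 2 * e + c)%N -> a%:R + b%:R = 2%:R * e%:R + c%:R :> rat.
Proof. by move=> H; rewrite -natrM -!natrD H. Qed.

Lemma nat_eq_rat5 (k m kp np : nat) (e : bool) : (4 * k + 40 * m = 280 * e + kp + 5 * np)%N ->
  4%:R * k%:R + 40%:R * m%:R = 280%:R * e%:R + kp%:R + 5%:R * np%:R :> rat.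
Proof. by move=> H; rewrite -!natrM -!natrD H. Qed.

Lemma bool_mul4 (b c : bool) : b%:R * (10%:R * c%:R - 5%:R / 4%:R) = 10%:R * (b && c)%:R - b%:R * (5%:R / 4%:R) :> rat.
Proof. by case: b; case: c; rewrite ?mulr1 ?mulr0 ?mul1r ?mul0r ?subr0 ?sub0r ?oppr0. Qed.

Lemma sum9 (G : nat -> rat) : \sum_(x < 9) G x = \sum_(k <- iota9) G k.
Proof. by rewrite -(big_mkord xpredT G). Qed.

Lemma mulrn_bool (e : bool) (a c : rat) : a = c * e%:R -> a = c *+ e.
Proof. by rewrite mulr_natr. Qed.

Lemma arith5 (k kp m np : nat) (e : bool) :
  4%:R * k%:R + 40%:R * m%:R = 280%:R * e%:R + kp%:R + 5%:R * np%:R :> rat ->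
  k%:R - kp%:R * 4^-1 + (10%:R * m%:R - np%:R * (5%:R / 4%:R)) = 70%:R * e%:R :> rat.
Proof. move=> H; lra. Qed.

Theorem mainTheorem3 :
  let N := incmx - 4%:R^-1 *: onesmx in
  (forall j : 'I_#|{: pair9}|, adjmx *m col j N = (- 12%:R) *: col j N)
  /\ \rank N = 27%N.
Proof.
move=> N; split.
  move=> j; apply/matrixP => i k.
  have [k0 Hk0] := phi_surj (enum_val i); have [m Hm] := psi_surj (enum_val j).
  rewrite !mxE /N (eq_bigr (fun l => (adj33 (enum_val i) (enum_val l))%:R *
     ([exists B in val (enum_val l), val (enum_val j) \subset B]%:R - 4^-1))); last first.
    by move=> l _; rewrite !mxE mulr1.
  rewrite (sum_enum (fun Q => (adj33 (enum_val i) Q)%:R *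
     ([exists B in val Q, val (enum_val j) \subset B]%:R - 4^-1))).
  rewrite (sum_bij _ phi_inj phi_surj) -Hk0 -Hm mulr1.
  have Hs := balL_nth k0.
  have Hsl := mem_nth [::] (ltn_ord k0).
  move: Hs Hsl; move Es : (nth [::] L k0) => s Hs Hsl.
  case/andP: (pa_ok m) => /andP[Ha Hb] _.
  rewrite /adj33 (phi_val k0) Es (inc_psi _ Hs).
  under eq_bigr => l _ do rewrite phi_val (adj_part Hs (balL_nth l)) (inc_psi _ (balL_nth l)).
  rewrite (sum_list (fun t => (adjL s t)%:R * ((lab t (pa m).1 == lab t (pa m).2)%:R - 4^-1))).
  under eq_bigr do rewrite bool_mul.
  rewrite sumrB -mulr_suml !sum_count.
  have Hpl := mem_nth (0,0)%N (ltn_ord m); rewrite -/(pa m) in Hpl.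
  case/andP: (allP C4 s Hsl) => /eqP Hsz /allP /(_ _ Hpl) /eqP Hc.
  have Hc' : count (fun x => adjL s x && (lab x (pa m).1 == lab x (pa m).2)) L =
     if lab s (pa m).1 == lab s (pa m).2 then 0%N else 12%N.
    by rewrite -Hc count_filter; apply: eq_count => t; rewrite /= andbC.
  rewrite Hc' -[count (adjL s) L]size_filter Hsz.
  case: (lab s (pa m).1 == lab s (pa m).2) => /=; lra.
pose V : 'M[rat]_(#|{: pair9}|, 9) := \matrix_(j, x) (x \in val (@enum_val _ {: pair9} j))%:R.
pose D : 'M[rat]_(9, #|{: pair9}|) := \matrix_(x, j) (10%:R * (x \in val (@enum_val _ {: pair9} j))%:R - 5%:R / 4%:R).
pose yy := fun x : 'I_9 => (inord ((x + 1) %% 9) : 'I_9).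
pose zz := fun x : 'I_9 => (inord ((x + 2) %% 9) : 'I_9).
pose R : 'M[rat]_(9, #|{: pair9}|) := \matrix_(x, j)
  ((((x \in val (@enum_val _ {: pair9} j)) && (yy x \in val (@enum_val _ {: pair9} j)))%:R
   + ((x \in val (@enum_val _ {: pair9} j)) && (zz x \in val (@enum_val _ {: pair9} j)))%:R
   - ((yy x \in val (@enum_val _ {: pair9} j)) && (zz x \in val (@enum_val _ {: pair9} j)))%:R) / 2%:R).
have HG : incmx^T *m N + V *m D = 70%:R%:M.
  apply/matrixP => p q; rewrite !mxE.
  have [mp Hp] := psi_surj (enum_val p); have [mq Hq] := psi_surj (enum_val q).
  have Eeq : (p == q) = (pa mp == pa mq).
    by rewrite -(inj_eq enum_val_inj) -Hp -Hq (inj_eq psi_inj) /pa nth_uniq ?uniqPL.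
  rewrite Eeq (eq_bigr (fun l => ([exists B in val (@enum_val _ {: part33} l), val (enum_val p) \subset B]%:R) * ([exists B in val (@enum_val _ {: part33} l), val (enum_val q) \subset B]%:R - 4^-1))); last first.
    by move=> l _; rewrite !mxE mulr1.
  rewrite (eq_bigr (fun x : 'I_9 => (x \in val (enum_val p))%:R * (10%:R * (x \in val (enum_val q))%:R - 5%:R / 4%:R))); last first.
    by move=> x _; rewrite !mxE.
  rewrite -Hp -Hq.
  rewrite (sum_enum (fun Q : part33 => ([exists B in val Q, val (psi mp) \subset B]%:R) * ([exists B in val Q, val (psi mq) \subset B]%:R - 4^-1))).
  rewrite (sum_bij _ phi_inj phi_surj).
  have S1 : \sum_(l < size L) [exists B in val (phi l), val (psi mp) \subset B]%:R *
     ([exists B in val (phi l), val (psi mq) \subset B]%:R - 4^-1) =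
     (count (fun t => (lab t (pa mp).1 == lab t (pa mp).2) && (lab t (pa mq).1 == lab t (pa mq).2)) L)%:R
     - (count (fun t => lab t (pa mp).1 == lab t (pa mp).2) L)%:R * 4^-1 :> rat.
    under eq_bigr => l _ do rewrite phi_val !(inc_psi _ (balL_nth l)).
    rewrite (sum_list (fun t => (lab t (pa mp).1 == lab t (pa mp).2)%:R * ((lab t (pa mq).1 == lab t (pa mq).2)%:R - 4^-1))).
    under eq_bigr do rewrite bool_mul.
    by rewrite sumrB -mulr_suml !sum_count.
  have S2 : \sum_(x < 9) (x \in val (psi mp))%:R * (10%:R * (x \in val (psi mq))%:R - 5%:R / 4%:R) =
     10%:R * (cnt9 (fun x => memp (pa mp).1 (pa mp).2 x && memp (pa mq).1 (pa mq).2 x))%:R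
     - (cnt9 (memp (pa mp).1 (pa mp).2))%:R * (5%:R / 4%:R) :> rat.
    under eq_bigr => x _ do rewrite (psi_mem' mp x) (psi_mem' mq x).
    rewrite (sum9 (fun x => (memp (pa mp).1 (pa mp).2 x)%:R * (10%:R * (memp (pa mq).1 (pa mq).2 x)%:R - 5%:R / 4%:R))).
    under eq_bigr do rewrite bool_mul4.
    by rewrite sumrB -mulr_suml -mulr_sumr !sum_count.
  rewrite S1 S2.
  have := eqP (allP (allP C5 _ (mem_nth (0,0)%N (ltn_ord mp))) _ (mem_nth (0,0)%N (ltn_ord mq))).
  rewrite -/(pa mp) -/(pa mq) => /nat_eq_rat5 H.
  apply: mulrn_bool; exact: arith5.
have HNV : N *m V = 0.
  apply/matrixP => i x; rewrite !mxE.
  have [k0 Hk0] := phi_surj (enum_val i).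
  rewrite (eq_bigr (fun j => ([exists B in val (enum_val i), val (@enum_val _ {: pair9} j) \subset B]%:R - 4^-1) * (x \in val (@enum_val _ {: pair9} j))%:R)); last first.
    by move=> j _; rewrite !mxE mulr1.
  rewrite (sum_enum (fun S : pair9 => ([exists B in val (enum_val i), val S \subset B]%:R - 4^-1) * (x \in val S)%:R)).
  rewrite (sum_bij _ psi_inj psi_surj) -Hk0 (phi_val k0).
  move: (balL_nth k0) (mem_nth [::] (ltn_ord k0)); move Es: (nth [::] L k0) => s Hs Hsl.
  under eq_bigr => m _ do rewrite (inc_psi _ Hs) psi_mem.
  rewrite (sum_listPL (fun ab => ((lab s ab.1 == lab s ab.2)%:R - 4^-1) * (memp ab.1 ab.2 x)%:R)).
  under eq_bigr do rewrite bool_mul2.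
  rewrite sumrB -mulr_suml !sum_count.
  have := eqP (allP (allP C8 s Hsl) x (in_iota9 x)).
  move=> /(congr1 (fun n => n%:R : rat)); rewrite natrM => H.
  lra.
have HRV : R *m V = 1%:M.
  apply/matrixP => x w; rewrite !mxE.
  have yyE : nat_of_ord (yy x) = ((x + 1) %% 9)%N by rewrite /yy inordK // ltn_pmod.
  have zzE : nat_of_ord (zz x) = ((x + 2) %% 9)%N by rewrite /zz inordK // ltn_pmod.
  pose F : {set 'I_9} -> rat := fun S => ((((x \in S) && (yy x \in S))%:R
   + ((x \in S) && (zz x \in S))%:R - ((yy x \in S) && (zz x \in S))%:R) / 2%:R) * (w \in S)%:R.
  rewrite (eq_bigr (fun j => F (val (@enum_val _ {: pair9} j)))); last first.
    by move=> j _; rewrite !mxE.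
  rewrite (sum_enum (fun S : pair9 => F (val S))) (sum_bij _ psi_inj psi_surj) /F.
  under eq_bigr => m _ do rewrite !psi_mem yyE zzE.
  rewrite (sum_listPL (fun ab => ((((memp ab.1 ab.2 x) && (memp ab.1 ab.2 ((x + 1) %% 9)))%:R
   + ((memp ab.1 ab.2 x) && (memp ab.1 ab.2 ((x + 2) %% 9)))%:R
   - ((memp ab.1 ab.2 ((x + 1) %% 9)) && (memp ab.1 ab.2 ((x + 2) %% 9)))%:R) / 2%:R) * (memp ab.1 ab.2 w)%:R)).
  under eq_bigr do rewrite bool_mul3.
  rewrite -mulr_suml sumrB big_split /= !sum_count.
  have := eqP (allP (allP C9 x (in_iota9 x)) w (in_iota9 w)).
  move=> /nat_eq_rat2 H.
  rewrite (_ : (x == w) = (nat_of_ord x == nat_of_ord w)) //.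
  lra.
have nS36 : #|{: pair9}| = 36%N by rewrite (card_bij psi_inj psi_surj) sizePL.
have rV : \rank V = 9%N.
  apply/eqP; rewrite eqn_leq rank_leq_col /=.
  by rewrite -{1}(mxrank1 rat 9) -HRV mxrankM_maxr.
have up : (\rank V <= #|{: pair9}| - \rank N)%N.
  rewrite -mxrank_tr -(mxrank_tr N) -mxrank_ker; apply: mxrankS.
  by rewrite sub_kermx -trmx_mul HNV trmx0.
have lo : (#|{: pair9}| <= \rank N + 9)%N.
  have := mxrank_add (incmx^T *m N) (V *m D); rewrite HG -scalemx1 mxrank_scale_nz ?mxrank1; last first.
    by rewrite pnatr_eq0.
  move=> H; apply: (leq_trans H); apply: leq_add; first exact: mxrankM_maxr.
  by apply: leq_trans (mxrankM_maxl V D) _; rewrite rV.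
move: up lo; rewrite rV; move: (\rank N) => r; rewrite nS36; lia.
Qed.
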